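(* Let $w \in \mathfrak{S}_n$ be a prism and let $i \in \textsf{supp}(w)$ be unconfined in the reduced words of $w$, with $|\{i-1,i+1\} \cap \textsf{supp}(w)| \le 1$. If $i+1 \notin \textsf{supp}(w)$, then $w$ contains the calibrated mesh pattern $(21, \{(0,1),(1,1),(2,1)\})$ with calibration $x_2 = i+1$, $y_2 = i+1$, or the calibrated mesh pattern $(21, \{(1,0),(1,1),(1,2)\})$ with calibration $x_2 = i+1$, $y_2 = i+1$. If $i-1 \notin \textsf{supp}(w)$, then $w$ contains the calibrated mesh pattern $(21, \{(0,1),(1,1),(2,1)\})$ with calibration $x_1 = i$, $y_1 = i$, or the calibrated mesh pattern $(21, \{(1,0),(1,1),(1,2)\})$ with calibration $x_1 = i$, $y_1 = i$.
   Context: Reduced words, support, Bruhat order: $\sigma_i$ swaps $i,i+1$; a reduced word of $w$ is a minimal-length word $i_1\cdots i_\ell$ with $w=\sigma_{i_1}\cdots\sigma_{i_\ell}$; $\textsf{supp}(w)$ is the set of letters in any reduced word; $u\preceq w$ iff a reduced word of $u$ is a subword of one of $w$; $B(w)=\{u:u\preceq w\}$; $w$ is a prism if $B(w)\cong\mathbf{2}\times X$ for some poset $X$ ($\mathbf{2}$ the two-element chain). A letter $i$ appearing exactly once in a reduced word $s$ is unconfined in $s$ if that occurrence is neither between two $i+1$'s nor between two $i-1$'s; this then holds in all reduced words of $w$. Calibrated mesh patterns: let $p \in \mathfrak{S}_k$ and $M \subseteq \{0,\dots,k\}^2$ (cell $(a,b)$ is the unit square with lower-left corner $(a,b)$ in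 the grid $[0,k+1]^2$ containing the graph $\{(j,p(j))\}$ of $p$). An occurrence of $p$ in $w \in \mathfrak{S}_n$ is a choice of positions $x_1<\cdots<x_k$ such that $w(x_1)\cdots w(x_k)$ is in the same relative order as $p(1)\cdots p(k)$; let $y_1<\cdots<y_k$ be the values $\{w(x_1),\dots,w(x_k)\}$ in increasing order, and set $x_0=y_0=0$, $x_{k+1}=y_{k+1}=n+1$. Such an occurrence is an occurrence of the mesh pattern $(p,M)$ if for every $(a,b)\in M$ there is no $x$ with $x_a < x < x_{a+1}$ and $y_b < w(x) < y_{b+1}$. A calibrated mesh pattern additionally prescribes values for some of the $x_a$ and $y_b$; $w$ contains it if $w$ has an occurrence of $(p,M)$ meeting those prescriptions. Here $21\in\mathfrak{S}_2$ is the permutation $2\,1$. *)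

(* Defs.v *)
From HB Require Import structures.
From mathcomp Require Import all_boot all_order all_fingroup.
Set Implicit Arguments. Unset Strict Implicit. Unset Printing Implicit Defensive.
Import Order.TTheory.

(* Permutations of {1,...,n} are represented by w : {perm 'I_n}, where the
   value i+1 corresponds to the ordinal i.  [pv w x] is w(x) for 1 <= x <= n
   (and 0 outside that range). *)
Definition pv (n : nat) (w : {perm 'I_n}) (x : nat) : nat :=
  if 0 < x then oapp (fun j : 'I_n => (w j).+1) 0 (insub x.-1) else 0.

(* The simple transposition sigma_i, swapping the values i and i+1
   (1 <= i <= n-1); identity for out-of-range letters (never used since
   words are required to have valid letters). *)
Definition sgen (n : nat) (i : nat) : {perm 'I_n} :=
  match insub i.-1, insub i with
  | Some a, Some b => tperm a b
  | _, _ => 1%g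
  end.

Definition valid_word (n : nat) (s : seq nat) : bool :=
  all (fun i => (0 < i) && (i < n)) s.

Definition word_prod (n : nat) (s : seq nat) : {perm 'I_n} :=
  (\prod_(i <- s) sgen n i)%g.

Definition is_word (n : nat) (w : {perm 'I_n}) (s : seq nat) : Prop :=
  valid_word n s /\ word_prod n s = w.

Definition reduced (n : nat) (w : {perm 'I_n}) (s : seq nat) : Prop :=
  is_word w s /\ forall t, is_word w t -> size s <= size t.

(* support: letters occurring in (some, equivalently every) reduced word *)
Definition supp (n : nat) (w : {perm 'I_n}) (i : nat) : Prop :=
  exists s, reduced w s /\ i \in s.

Definition bruhat (n : nat) (u w : {perm 'I_n}) : Prop :=
  exists su sw, [/\ reduced u su, reduced w sw & subseq su sw].

(* w is a prism: B(w) = {u | u <= w} is isomorphic, as a poset, to 2 x X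
   for some poset X (2 = the chain false < true, product order). *)
Definition prism (n : nat) (w : {perm 'I_n}) : Prop :=
  exists (d : Order.disp_t) (X : porderType d)
         (f : {u : {perm 'I_n} | bruhat u w} -> bool * X),
    bijective f /\
    forall u v, bruhat (sval u) (sval v) <->
      (((f u).1 ==> (f v).1) && ((f u).2 <= (f v).2)%O).

Definition unconfined (s : seq nat) (i : nat) : bool :=
  let k := index i s in
  [&& count_mem i s == 1,
      ~~ ((i.+1 \in take k s) && (i.+1 \in drop k.+1 s)) &
      ~~ ((i.-1 \in take k s) && (i.-1 \in drop k.+1 s))].

(* Mesh patterns.  p : one-line notation of a pattern in S_k (values 1..k),
   M : set of cells (a,b), xs : chosen positions x_1 < ... < x_k.
   [xext xs a] is x_a with x_0 = 0, x_{k+1} = n+1; [yext w xs b] is y_b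
   (b-th smallest value of the occurrence), with y_0 = 0, y_{k+1} = n+1. *)
Definition xext (n : nat) (xs : seq nat) (a : nat) : nat :=
  nth n.+1 (0 :: xs) a.

Definition yext (n : nat) (w : {perm 'I_n}) (xs : seq nat) (b : nat) : nat :=
  nth n.+1 (0 :: sort leq (map (pv w) xs)) b.

Definition mesh_occurrence (n : nat) (w : {perm 'I_n}) (p : seq nat)
    (M : seq (nat * nat)) (xs : seq nat) : Prop :=
  [/\ size xs = size p, sorted ltn xs, all (fun x => (0 < x) && (x <= n)) xs,
      (forall a b, a < size p -> b < size p ->
         (nth 0 p a < nth 0 p b) = (pv w (nth 0 xs a) < pv w (nth 0 xs b))) &
      (forall c, c \in M -> forall x,
         ~ ((xext n xs c.1 < x < xext n xs c.1.+1) /\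
            (yext w xs c.2 < pv w x < yext w xs c.2.+1)))].

(* w contains the calibrated mesh pattern (p, M) with prescriptions
   x_a = v for (a,v) in cx and y_b = v for (b,v) in cy. *)
Definition contains_cmesh (n : nat) (w : {perm 'I_n}) (p : seq nat)
    (M : seq (nat * nat)) (cx cy : seq (nat * nat)) : Prop :=
  exists xs, [/\ mesh_occurrence w p M xs,
    (forall c, c \in cx -> xext n xs c.1 = c.2) &
    (forall c, c \in cy -> yext w xs c.1 = c.2)].

Definition mesh_row : seq (nat * nat) := [:: (0, 1); (1, 1); (2, 1)].
Definition mesh_col : seq (nat * nat) := [:: (1, 0); (1, 1); (1, 2)].

(* Main.v *)
Require Import Defs.
From mathcomp Require Import all_boot all_order all_fingroup zify.
Set Implicit Arguments. Unset Strict Implicit. Unset Printing Implicit Defensive.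

Lemma sort21 (x y : nat) : y < x -> sort leq [:: x; y] = [:: y; x].
Proof. by move=> h; rewrite /sort /= leqNgt h. Qed.

Section B.
Variable n : nat.
Implicit Types (w P Q : {perm 'I_n}).

Lemma pvE w (x : 'I_n) : pv w x.+1 = (w x).+1.
Proof. by rewrite /pv /= valK. Qed.

Lemma pv_out w x : ~~ (0 < x <= n) -> pv w x = 0.
Proof.
rewrite /pv; case: x => [|x] //= h.
by rewrite insubF //; apply/negbTE; lia.
Qed.

Lemma pv_ord x : 0 < x <= n -> {y : 'I_n | x = y.+1}.
Proof.
move=> h; have hx : x.-1 < n by lia.
by exists (Ordinal hx) => /=; lia.
Qed.

Lemma pv_rng w x : 0 < x <= n -> 0 < pv w x <= n.
Proof. move=> /pv_ord [y ->]; rewrite pvE; have := ltn_ord (w y); lia. Qed.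

Lemma pv_inj w x y : 0 < x <= n -> 0 < y <= n -> pv w x = pv w y -> x = y.
Proof.
move=> /pv_ord [a ->] /pv_ord [b ->]; rewrite !pvE => [[]] /val_inj /perm_inj -> //.
Qed.

Lemma pv_surj w y : 0 < y <= n -> exists2 x, 0 < x <= n & pv w x = y.
Proof.
move=> /pv_ord [b ->]; exists ((w^-1)%g b).+1; first by have := ltn_ord ((w^-1)%g b); lia.
by rewrite pvE permKV.
Qed.

Lemma pv_eq P Q : (forall x, 0 < x <= n -> pv P x = pv Q x) -> P = Q.
Proof.
move=> h; apply/permP => x; apply: val_inj; have := h x.+1.
rewrite !pvE => e; have : (P x).+1 = (Q x).+1 by apply: e; have := ltn_ord x; lia.
by case.
Qed.

Lemma pv1 x : 0 < x <= n -> pv (1%g : {perm 'I_n}) x = x.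
Proof. by move=> /pv_ord [y ->]; rewrite pvE perm1. Qed.

Lemma tpermv (a b x : 'I_n) : val (tperm a b x) =
  if val x == val a then val b else if val x == val b then val a else val x.
Proof.
case: (eqVneq x a) => [->|ha]; first by rewrite tpermL eqxx.
case: (eqVneq x b) => [->|hb].
  by rewrite tpermR eqxx; case: eqP => // /val_inj ->.
have e1 : (val x == val a) = false by apply/negP => /eqP/val_inj; apply/eqP.
have e2 : (val x == val b) = false by apply/negP => /eqP/val_inj; apply/eqP.
by rewrite e1 e2 tpermD // eq_sym.
Qed.

Definition sw (j x : nat) := if x == j then j.+1 else if x == j.+1 then j else x.

Lemma sgenE j (h1 : j.-1 < n) (h2 : j < n) :
  sgen n j = tperm (Ordinal h1) (Ordinal h2).
Proof.
rewrite /sgen (insubT (fun k => k < n) h1) (insubT (fun k => k < n) h2) /=.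
by congr tperm; apply: val_inj.
Qed.

Lemma pv_sgen j P x : 0 < j < n -> pv (sgen n j * P)%g x = pv P (sw j x).
Proof.
move=> hj; have h1 : j.-1 < n by lia. have h2 : j < n by lia.
case hx: (0 < x <= n); last first.
  rewrite !pv_out ?hx //; rewrite /sw; case: ifP => [/eqP|_]; first lia.
  case: ifP => [/eqP|_]; lia.
have [y ey] := pv_ord (idP hx); subst x.
rewrite pvE permM (sgenE h1 h2).
have -> : sw j y.+1 = (tperm (Ordinal h1) (Ordinal h2) y).+1.
  by rewrite /sw tpermv /=; do ! (case: eqP => ?); lia.
by rewrite pvE.
Qed.

Lemma sgen2 j : (sgen n j * sgen n j)%g = 1%g.
Proof.
rewrite /sgen; case: (insub j.-1 : option 'I_n) => [a|]; case: (insub j : option 'I_n) => [b|] //=;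
  by rewrite ?tperm2 ?mulg1.
Qed.

Lemma wp_cons j s : word_prod n (j :: s) = (sgen n j * word_prod n s)%g.
Proof. by rewrite /word_prod big_cons. Qed.
Lemma wp_nil : word_prod n [::] = 1%g.
Proof. by rewrite /word_prod big_nil. Qed.
Lemma wp_cat s t : word_prod n (s ++ t) = (word_prod n s * word_prod n t)%g.
Proof. by rewrite /word_prod big_cat. Qed.

End B.

Ltac fin := repeat (let H := fresh "H" in case: eqP => H); rewrite /= ?andbT ?andbF ?orbT ?orbF //; lia.

Section I.
Variable n : nat.
Implicit Types (w P Q : {perm 'I_n}).

Lemma ord_eqE (x y : 'I_n) : (x == y) = (nat_of_ord x == nat_of_ord y).
Proof. by []. Qed.

Lemma tpermn (a b x : 'I_n) : nat_of_ord (tperm a b x) =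
  if nat_of_ord x == nat_of_ord a then nat_of_ord b
  else if nat_of_ord x == nat_of_ord b then nat_of_ord a else nat_of_ord x.
Proof. exact: tpermv. Qed.

Definition Inv P : {set 'I_n * 'I_n} := [set p : 'I_n * 'I_n | (p.1 < p.2) && (P p.2 < P p.1)].
Definition ninv P := #|Inv P|.

Lemma inv_desc (a b : 'I_n) P : nat_of_ord b = (nat_of_ord a).+1 -> P b < P a ->
  (ninv (tperm a b * P)%g).+1 = ninv P.
Proof.
move=> hab hP.
set t := tperm a b.
have eq : Inv P = (a,b) |: ((fun p => (t p.1, t p.2)) @^-1: Inv (t * P)%g).
  apply/setP => [[x y]]; rewrite !inE /= !permM !tpermK xpair_eqE.
  case: (eqVneq x b) => [->|hxb]; case: (eqVneq y a) => [->|hya].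
  - rewrite !ord_eqE; have -> : (P a < P b) = false by apply/negbTE; rewrite -leqNgt; lia.
    by rewrite !andbF orbF; fin.
  - have hya' : nat_of_ord y <> nat_of_ord a by move=> /val_inj; apply/eqP.
    case: (P y < P x); rewrite ?andbT ?andbF ?orbF ?ord_eqE /t ?tpermn;
      fin.
  - have hxb' : nat_of_ord x <> nat_of_ord b by move=> /val_inj; apply/eqP.
    case: (P y < P x); rewrite ?andbT ?andbF ?orbF ?ord_eqE /t ?tpermn;
      fin.
  - have hya' : nat_of_ord y <> nat_of_ord a by move=> /val_inj; apply/eqP.
    have hxb' : nat_of_ord x <> nat_of_ord b by move=> /val_inj; apply/eqP.
    case: (boolP ((x == a) && (y == b))) => [/andP [/eqP -> /eqP ->]|hxy].
      rewrite hP andbT /=; lia.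
    have hxy' : ~ (nat_of_ord x = a /\ nat_of_ord y = b).
      by move=> [/val_inj e1 /val_inj e2]; rewrite e1 e2 !eqxx in hxy.
    case: (P y < P x); rewrite ?andbT ?andbF ?orbF ?ord_eqE /t ?tpermn;
      fin.
rewrite /ninv eq cardsU1 card_preimset; last first.
  by move=> [x1 y1] [x2 y2] /= [] /perm_inj -> /perm_inj ->.
rewrite /Inv !inE /t /= tpermL tpermR; have -> : (b < a) = false by apply/negbTE; rewrite -leqNgt; lia.
all: by [].
all: by [].
Qed.


Lemma sw_l j : sw j j = j.+1.
Proof. by rewrite /sw eqxx. Qed.
Lemma sw_r j : sw j j.+1 = j.
Proof. by rewrite /sw ifF ?eqxx //; apply/negbTE; lia. Qed.

Lemma inv_desc1 j P : 0 < j < n -> pv P j.+1 < pv P j ->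
  (ninv (sgen n j * P)%g).+1 = ninv P.
Proof.
move=> hj; have h1 : j.-1 < n by lia. have h2 : j < n by lia.
rewrite (sgenE h1 h2).
have e1 : pv P j.+1 = (P (Ordinal h2)).+1 := pvE P (Ordinal h2).
have e2 : pv P j = (P (Ordinal h1)).+1 by rewrite -pvE /=; congr pv; lia.
rewrite e1 e2 => h; apply: inv_desc => /=; lia.
Qed.

Lemma inv_sgen j P : 0 < j < n -> ninv (sgen n j * P)%g <= (ninv P).+1.
Proof.
move=> hj; case: (ltngtP (pv P j.+1) (pv P j)) => h.
- have := inv_desc1 hj h; lia.
- set Q := (sgen n j * P)%g.
  have hQ : pv Q j.+1 < pv Q j by rewrite /Q !pv_sgen // sw_l sw_r.
  have := inv_desc1 hj hQ; rewrite /Q mulgA sgen2 mul1g; lia.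
- have := pv_inj (w := P) (x := j.+1) (y := j); lia.
Qed.

Lemma inv1 : ninv (1%g : {perm 'I_n}) = 0.
Proof.
rewrite /ninv; apply/eqP; rewrite cards_eq0; apply/eqP/setP => p; rewrite !inE !perm1.
by apply/negP => /andP [h1 h2]; lia.
Qed.

Lemma inv_word t : valid_word n t -> ninv (word_prod n t) <= size t.
Proof.
elim: t => [|j t IH]; first by rewrite wp_nil inv1.
rewrite /valid_word /= => /andP [hj ht]; rewrite wp_cons.
have := inv_sgen (word_prod n t) hj; have := IH ht; lia.
Qed.

Lemma reducedI s P : valid_word n s -> word_prod n s = P -> size s = ninv P -> reduced P s.
Proof.
move=> vs ws hs; split; first by split.
by move=> t [vt et]; rewrite hs -et; exact: inv_word.
Qed.

Definition stab P j := forall x, 0 < x <= j -> pv P x <= j.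

Lemma stab_compl P j x : stab P j -> j < x <= n -> j < pv P x.
Proof.
move=> hs hx; rewrite ltnNge; apply/negP => hle.
have [y ey] := pv_ord (n := n) (x := x) ltac:(lia).
set S := [set z : 'I_n | z < j].
have hsub : P @: (y |: S) \subset S.
  apply/subsetP => z /imsetP [u hu ->]; rewrite inE.
  move: hu; rewrite !inE => /orP [/eqP ->|hu].
  - by move: hle; rewrite ey pvE; lia.
  - have := hs u.+1; rewrite pvE; lia.
have := subset_leq_card hsub; rewrite card_imset; last exact: perm_inj.
rewrite cardsU1 inE; have -> : (y < j) = false by apply/negbTE; lia.
by rewrite add1n ltnn.
Qed.

Lemma stab_wp t j : valid_word n t -> j \notin t -> stab (word_prod n t) j.
Proof.
elim: t => [|l t IH].
- move=> _ _ x hx; rewrite wp_nil; case: (boolP (x <= n)) => h.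
  + rewrite pv1; lia.
  + rewrite pv_out; lia.
- rewrite /valid_word /= => /andP [hl ht]; rewrite in_cons negb_or => /andP [hjl hjt] x hx.
  move/eqP: hjl => hjl.
  rewrite wp_cons pv_sgen //; apply: (IH ht hjt); rewrite /sw; fin.
Qed.

Lemma stab_desc P j : stab P j -> 0 < j < n -> pv P j.+1 < pv P j -> False.
Proof.
move=> hst hj hd; have h1 := hst j ltac:(lia).
have h2 := stab_compl (x := j.+1) hst ltac:(lia); lia.
Qed.

Lemma desc_of_inv P d x : 0 < x -> x + d.+1 <= n -> pv P (x + d.+1) < pv P x ->
  exists2 j, 0 < j < n & pv P j.+1 < pv P j.
Proof.
elim: d x => [|d IH] x h0 h1 h2.
  by exists x; [lia | rewrite addn1 in h2].
case: (ltngtP (pv P x.+1) (pv P x)) => h.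
- by exists x; [lia|exact: h].
- apply: (IH x.+1); [lia|lia|]; have -> : x.+1 + d.+1 = x + d.+2 by lia. lia.
- have := pv_inj (w := P) (x := x.+1) (y := x); lia.
Qed.

Lemma desc_exists P m : ninv P = m.+1 -> exists2 j, 0 < j < n & pv P j.+1 < pv P j.
Proof.
move=> hm; have : 0 < #|Inv P| by rewrite -/(ninv P) hm.
move/card_gt0P => [[x y]]; rewrite inE /= => /andP [hxy hP].
have e : y.+1 = x.+1 + (y - x.+1).+1 by lia.
apply: (desc_of_inv (x := x.+1) (d := y - x.+1)); first lia.
  by rewrite -e; have := ltn_ord y; lia.
by rewrite -e !pvE.
Qed.

Lemma inv0_1 P : ninv P = 0 -> P = 1%g.
Proof.
move=> h0.
have inc : forall x y : 'I_n, x < y -> P x < P y.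
  move=> x y hxy; case: (ltngtP (P x) (P y)) => // h.
  - have : 0 < ninv P by apply/card_gt0P; exists (x,y); rewrite inE /= hxy h.
    lia.
  - by move/val_inj/perm_inj: h => h; subst; rewrite ltnn in hxy.
have ge : forall Q : {perm 'I_n}, (forall x y : 'I_n, x < y -> Q x < Q y) ->
    forall x : 'I_n, x <= Q x.
  move=> Q hQ x; move: {2}(nat_of_ord x) (erefl (nat_of_ord x)) => k.
  elim: k x => [|k IH] x hk; first by rewrite hk.
  have hk' : k < n by have := ltn_ord x; lia.
  have a1 := IH (Ordinal hk') erefl; have a2 := hQ (Ordinal hk') x ltac:(rewrite /= hk; lia); simpl in a1; lia.
have incV : forall x y : 'I_n, x < y -> (P^-1)%g x < (P^-1)%g y.
  move=> x y hxy; case: (ltngtP ((P^-1)%g x) ((P^-1)%g y)) => // h.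
  - have := inc _ _ h; rewrite !permKV; lia.
  - by move/val_inj/perm_inj: h => h; subst; rewrite ltnn in hxy.
apply/permP => x; apply/val_inj; rewrite perm1 /=.
have := ge P inc x; have := ge _ incV (P x); rewrite permK; lia.
Qed.

Lemma canon P : exists s, [/\ valid_word n s, word_prod n s = P, size s = ninv P &
  forall j, j \in s -> ~ stab P j].
Proof.
move: {2}(ninv P) (erefl (ninv P)) => m; elim: m P => [|m IH] P hm.
  by exists [::]; split => //; rewrite wp_nil (inv0_1 hm).
have [j hj hd] := desc_exists hm.
set P' := (sgen n j * P)%g.
have hP' : ninv P' = m by rewrite /P'; have := inv_desc1 hj hd; lia.
have [s [vs ws ss ls]] := IH P' hP'.
exists (j :: s); split.
- by rewrite /valid_word /=; apply/andP; split.
- by rewrite wp_cons ws /P' mulgA sgen2 mul1g.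
- by rewrite /= ss hP' hm.
- move=> l; rewrite in_cons => /orP [/eqP ->|hl] hst; first exact: (stab_desc hst hj hd).
  have nlj : l <> j by move=> e; subst; exact: (stab_desc hst hj hd).
  apply: (ls l hl) => x hx; rewrite /P' pv_sgen //; apply: hst; rewrite /sw; fin.
Qed.

End I.

Section M.
Variable n : nat.
Implicit Types (w P Q : {perm 'I_n}).

Lemma sw_o j x : x <> j -> x <> j.+1 -> sw j x = x.
Proof. by move=> h1 h2; rewrite /sw; case: eqP => // _; case: eqP. Qed.

Lemma pv_ne w x y : 0 < x <= n -> 0 < y <= n -> x <> y -> pv w x <> pv w y.
Proof. by move=> hx hy hne e; apply: hne; exact: pv_inj e. Qed.

Lemma rchain k : forall P b, 0 < b -> b + k <= n ->
  (forall x, b < x <= b + k -> pv P x < pv P b) ->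
  exists Q : {perm 'I_n}, [/\ P = (word_prod n (iota b k) * Q)%g, ninv Q + k = ninv P,
    pv Q (b + k) = pv P b, (forall x, b <= x < b + k -> pv Q x = pv P x.+1) &
    (forall x, x < b \/ b + k < x -> pv Q x = pv P x)].
Proof.
elim: k => [|k IH] P b h0 h1 hc.
  exists P; split; [by rewrite wp_nil mul1g | by rewrite addn0 | by rewrite addn0 | | by []].
  move=> x; lia.
have hj : 0 < b < n by lia.
have hd : pv P b.+1 < pv P b by apply: hc; lia.
have hinv := inv_desc1 hj hd.
have [Q [e1 e2 e3 e4 e5]] := IH (sgen n b * P)%g b.+1 ltac:(lia) ltac:(lia) (fun x hx =>
  ltac:(rewrite !pv_sgen // sw_r sw_o; [apply: hc|..]; lia)).
exists Q; split.
- by rewrite /= wp_cons -mulgA -e1 mulgA sgen2 mul1g.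
- lia.
- have -> : b + k.+1 = b.+1 + k by lia.
  by rewrite e3 pv_sgen // sw_r.
- move=> x hx; case: (eqVneq x b) => [->|hxb].
  + by rewrite e5; [rewrite pv_sgen // sw_l | lia].
  + move/eqP: hxb => hxb; rewrite e4; last lia.
    by rewrite pv_sgen // sw_o //; lia.
- move=> x hx; rewrite e5; last lia.
  by rewrite pv_sgen // sw_o //; lia.
Qed.

Lemma lchain d k : forall P, 0 < d -> d + k <= n ->
  (forall x, d <= x < d + k -> pv P (d + k) < pv P x) ->
  exists Q : {perm 'I_n}, [/\ P = (word_prod n (rev (iota d k)) * Q)%g, ninv Q + k = ninv P,
    pv Q d = pv P (d + k), (forall x, d <= x < d + k -> pv Q x.+1 = pv P x) &
    (forall x, x < d \/ d + k < x -> pv Q x = pv P x)].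
Proof.
elim: k => [|k IH] P h0 h1 hc.
  exists P; split; [by rewrite wp_nil mul1g | by rewrite addn0 | by rewrite addn0 | | by []].
  move=> x; lia.
have hj : 0 < d + k < n by lia.
have hd : pv P (d + k).+1 < pv P (d + k) by rewrite -addnS; apply: hc; lia.
have hinv := inv_desc1 hj hd.
have [Q [e1 e2 e3 e4 e5]] := IH (sgen n (d + k) * P)%g ltac:(lia) ltac:(lia) (fun x hx =>
  ltac:(rewrite !pv_sgen // sw_l sw_o; [rewrite -addnS; apply: hc|..]; lia)).
exists Q; split.
- have er : rev (iota d k.+1) = (d + k) :: rev (iota d k) by rewrite -addn1 iotaD rev_cat.
  by rewrite er wp_cons -mulgA -e1 mulgA sgen2 mul1g.
- lia.
- by rewrite e3 pv_sgen // sw_l addnS.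
- move=> x hx; case: (eqVneq x (d + k)) => [->|hxb].
  + by rewrite e5; [rewrite pv_sgen // sw_r | lia].
  + move/eqP: hxb => hxb; rewrite e4; last lia.
    by rewrite pv_sgen // sw_o //; lia.
- move=> x hx; rewrite e5; last lia.
  by rewrite pv_sgen // sw_o //; lia.
Qed.

Lemma notstab_i w i : (forall s, reduced w s -> unconfined s i) -> ~ stab w i.
Proof.
move=> hu hs; have [s [vs ws ss ls]] := canon w.
have := hu s (reducedI vs ws ss); rewrite /unconfined => /and3P [/eqP hc _ _].
have : i \notin s by apply/negP => /ls; apply.
by move/count_memPn; rewrite hc.
Qed.

Lemma key1 w i : 0 < i < n -> stab w i.+1 ->
  (forall s, reduced w s -> unconfined s i) -> pv w i.+1 = i \/ pv w i = i.+1.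
Proof.
move=> hi hst hu; have notst := notstab_i hu.
case: (eqVneq (pv w i.+1) i) => [->|/eqP h1]; first by left.
case: (eqVneq (pv w i) i.+1) => [->|/eqP h2]; first by right.
exfalso.
have [b hb eb] := pv_surj w (y := i.+1) ltac:(lia).
have hbi : b <= i.+1.
  rewrite leqNgt; apply/negP => hh; have := stab_compl (x := b) hst ltac:(lia); lia.
have hbne : b <> i by move=> e; subst; lia.
have hbi1 : b <> i.+1.
  move=> e; subst; apply: notst => x hx.
  have := hst x ltac:(lia); have := pv_ne (w := w) (x := x) (y := i.+1) ltac:(lia) ltac:(lia) ltac:(lia).
  rewrite eb; lia.
have [Q [e1 e2 e3 e4 e5]] := rchain (k := i.+1 - b) (P := w) (b := b)
  ltac:(lia) ltac:(lia) (fun x hx => ltac:(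
    have := hst x ltac:(lia); have := pv_ne (w := w) (x := x) (y := b) ltac:(lia) ltac:(lia) ltac:(lia);
    rewrite eb; lia)).
have ebk : b + (i.+1 - b) = i.+1 by lia.
rewrite ebk in e3 e4 e5.
have stQ : stab Q i.
  move=> x hx; case: (ltnP x b) => hxb.
  - rewrite e5; last lia.
    have := hst x ltac:(lia); have := pv_ne (w := w) (x := x) (y := b) ltac:(lia) ltac:(lia) ltac:(lia).
    rewrite eb; lia.
  - rewrite e4; last lia.
    have := hst x.+1 ltac:(lia); have := pv_ne (w := w) (x := x.+1) (y := b) ltac:(lia) ltac:(lia) ltac:(lia).
    rewrite eb; lia.
have nstQ : ~ stab Q i.-1.
  move=> hs; have := stab_compl (x := i) hs ltac:(lia); rewrite e4; last lia.
  have := hst i.+1 ltac:(lia); have := pv_ne (w := w) (x := i.+1) (y := b) ltac:(lia) ltac:(lia) ltac:(lia).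
  rewrite eb; lia.
have [t [vt wt st lt]] := canon Q.
have nit : i \notin t by apply/negP => /lt; apply.
have i1t : i.-1 \in t.
  apply/negPn/negP => hn; apply: nstQ; rewrite -wt; exact: stab_wp vt hn.
have es : iota b (i.+1 - b) = iota b (i - b) ++ [:: i].
  have -> : i.+1 - b = (i - b) + 1 by lia.
  by rewrite iotaD /=; congr (_ ++ [:: _]); lia.
have nii : i \in iota b (i - b) = false by rewrite mem_iota; apply/negbTE; lia.
have red : reduced w (iota b (i - b) ++ i :: t).
  apply: reducedI.
  - rewrite /valid_word all_cat; apply/andP; split.
      by apply/allP => x; rewrite mem_iota => hx; lia.
    by rewrite /= hi.
  - by rewrite -cat1s catA -es wp_cat wt -e1.
  - by rewrite size_cat size_iota /= st; lia.
have := hu _ red; rewrite /unconfined => /and3P [_ _].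
have hidx : index i (iota b (i - b) ++ i :: t) = i - b.
  by rewrite index_cat nii size_iota /= eqxx addn0.
rewrite hidx take_size_cat ?size_iota //.
rewrite drop_cat size_iota ifF; last by apply/negbTE; lia.
rewrite subSnn /= drop0 i1t andbT mem_iota.
by move/negP; apply; lia.
Qed.

Lemma key2 w i : 0 < i < n -> stab w i.-1 ->
  (forall s, reduced w s -> unconfined s i) -> pv w i = i.+1 \/ pv w i.+1 = i.
Proof.
move=> hi hst hu; have notst := notstab_i hu.
case: (eqVneq (pv w i) i.+1) => [->|/eqP h1]; first by left.
case: (eqVneq (pv w i.+1) i) => [->|/eqP h2]; first by right.
exfalso.
have [c hc ec] := pv_surj w (y := i) ltac:(lia).
have hci : i <= c.
  rewrite leqNgt; apply/negP => hh; have := hst c ltac:(lia); lia.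
have hci1 : c <> i.+1 by move=> e; rewrite e in ec; lia.
have hcne : c <> i.
  move=> e; rewrite e in ec; apply: notst => x hx; case: (eqVneq x i) => [->|/eqP hxc].
    by rewrite ec.
  have := hst x ltac:(lia); lia.
have [Q [e1 e2 e3 e4 e5]] := lchain (d := i) (k := c - i) (P := w)
  ltac:(lia) ltac:(lia) (fun x hx => ltac:(
    have ed : i + (c - i) = c := ltac:(lia); rewrite ed ec;
    have := stab_compl (x := x) hst ltac:(lia);
    have := pv_ne (w := w) (x := x) (y := c) ltac:(lia) ltac:(lia) ltac:(lia);
    rewrite ec; lia)).
have ebk : i + (c - i) = c by lia.
rewrite ebk ec in e3; rewrite ebk in e4 e5.
have stQ : stab Q i.
  move=> x hx; case: (ltnP x i) => hxb.
  - rewrite e5; last lia. have := hst x ltac:(lia); lia.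
  - have -> : x = i by lia. by rewrite e3.
have nstQ : ~ stab Q i.+1.
  move=> hs; have := hs i.+1 ltac:(lia); rewrite e4; last lia.
  have := stab_compl (x := i) hst ltac:(lia).
  have := pv_ne (w := w) (x := i) (y := c) ltac:(lia) ltac:(lia) ltac:(lia).
  rewrite ec; lia.
have [t [vt wt st lt]] := canon Q.
have nit : i \notin t by apply/negP => /lt; apply.
have i1t : i.+1 \in t.
  apply/negPn/negP => hn; apply: nstQ; rewrite -wt; exact: stab_wp vt hn.
have es : rev (iota i (c - i)) = rev (iota i.+1 (c - i).-1) ++ [:: i].
  have -> : c - i = ((c - i).-1).+1 by lia.
  by rewrite /= rev_cons cats1.
have nii : i \in rev (iota i.+1 (c - i).-1) = false by rewrite mem_rev mem_iota; apply/negbTE; lia.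
have red : reduced w (rev (iota i.+1 (c - i).-1) ++ i :: t).
  apply: reducedI.
  - rewrite /valid_word all_cat; apply/andP; split.
      by apply/allP => x; rewrite mem_rev mem_iota => hx; lia.
    by rewrite /= hi.
  - by rewrite -cat1s catA -es wp_cat wt -e1.
  - by rewrite size_cat size_rev size_iota /= st; lia.
have := hu _ red; rewrite /unconfined => /and3P [_ + _].
have hidx : index i (rev (iota i.+1 (c - i).-1) ++ i :: t) = (c - i).-1.
  by rewrite index_cat nii size_rev size_iota /= eqxx addn0.
rewrite hidx take_size_cat ?size_rev ?size_iota //.
rewrite drop_cat size_rev size_iota ifF; last by apply/negbTE; lia.
rewrite subSnn /= drop0 i1t andbT mem_rev mem_iota.
by move/negP; apply; lia.
Qed.

End M.

Lemma occ21 n (w : {perm 'I_n}) x1 x2 M cx cy :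
  0 < x1 < x2 -> x2 <= n -> pv w x2 < pv w x1 ->
  (forall c, c \in M -> forall x,
     ~ ((xext n [:: x1; x2] c.1 < x < xext n [:: x1; x2] c.1.+1) /\
        (yext w [:: x1; x2] c.2 < pv w x < yext w [:: x1; x2] c.2.+1))) ->
  (forall c, c \in cx -> xext n [:: x1; x2] c.1 = c.2) ->
  (forall c, c \in cy -> yext w [:: x1; x2] c.1 = c.2) ->
  contains_cmesh w [:: 2; 1] M cx cy.
Proof.
move=> h1 h2 h3 hm hx hy; exists [:: x1; x2]; split => //; split => //=.
- rewrite andbT; lia.
- rewrite andbT; apply/andP; split; lia.
- move=> a b ha hb; case: a ha => [|[|a]] //= _; case: b hb => [|[|b]] //= _; rewrite ?ltnn //.
  all: try (by apply/esym/negbTE; rewrite -leqNgt; lia); try (by apply/esym; lia).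
Qed.

Theorem proposition3p5 (n : nat) (w : {perm 'I_n}) (i : nat) :
  prism w ->
  supp w i ->
  (forall s, reduced w s -> unconfined s i) ->
  ~ (supp w i.-1 /\ supp w i.+1) ->
  (~ supp w i.+1 ->
     contains_cmesh w [:: 2; 1] mesh_row [:: (2, i.+1)] [:: (2, i.+1)] \/
     contains_cmesh w [:: 2; 1] mesh_col [:: (2, i.+1)] [:: (2, i.+1)]) /\
  (~ supp w i.-1 ->
     contains_cmesh w [:: 2; 1] mesh_row [:: (1, i)] [:: (1, i)] \/
     contains_cmesh w [:: 2; 1] mesh_col [:: (1, i)] [:: (1, i)]).
Proof.
move=> _ [s0 [[[vs0 _] _] hi0]] hu _.
have hi : 0 < i < n by move/allP: vs0 => /(_ i hi0).
have stab_of : forall j, ~ supp w j -> stab w j.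
  move=> j hj; have [s [vs ws ss ls]] := canon w; rewrite -ws; apply: (stab_wp vs).
  by apply/negP => hjs; apply: hj; exists s; split => //; exact: reducedI vs ws ss.
split.
- move=> hns; have hst := stab_of _ hns.
  case: (key1 hi hst hu) => h.
  + left.
    have [b hb eb] := pv_surj w (y := i.+1) ltac:(lia).
    have hbi : b <= i.+1.
      rewrite leqNgt; apply/negP => hh; have := stab_compl (x := b) hst ltac:(lia); lia.
    have hbi1 : b <> i.+1 by move=> e; rewrite e in eb; lia.
    have ey : sort leq [:: pv w b; pv w i.+1] = [:: i; i.+1] by rewrite eb h sort21.
    apply: (occ21 (x1 := b) (x2 := i.+1)); try lia.
    * move=> c; rewrite !inE => /or3P [] /eqP -> x; rewrite /xext /yext /= ey /=; lia.
    * by move=> c; rewrite inE => /eqP ->.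
    * by move=> c; rewrite inE => /eqP -> /=; rewrite /yext /= ey.
  + right.
    have ha : pv w i.+1 < i.+1.
      have := hst i.+1 ltac:(lia); have := pv_ne (w := w) (x := i.+1) (y := i) ltac:(lia) ltac:(lia) ltac:(lia).
      rewrite h; lia.
    have ey : sort leq [:: pv w i; pv w i.+1] = [:: pv w i.+1; i.+1] by rewrite h sort21.
    apply: (occ21 (x1 := i) (x2 := i.+1)); try lia.
    * move=> c; rewrite !inE => /or3P [] /eqP -> x; rewrite /xext /yext /= ey /=; lia.
    * by move=> c; rewrite inE => /eqP ->.
    * by move=> c; rewrite inE => /eqP -> /=; rewrite /yext /= ey.
- move=> hns; have hst := stab_of _ hns.
  case: (key2 hi hst hu) => h.
  + left.
    have [c hc ec] := pv_surj w (y := i) ltac:(lia).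
    have hci : i <= c.
      rewrite leqNgt; apply/negP => hh; have := hst c ltac:(lia); lia.
    have hci1 : c <> i by move=> e; rewrite e in ec; lia.
    have ey : sort leq [:: pv w i; pv w c] = [:: i; i.+1] by rewrite ec h sort21.
    apply: (occ21 (x1 := i) (x2 := c)); try lia.
    * move=> d; rewrite !inE => /or3P [] /eqP -> x; rewrite /xext /yext /= ey /=; lia.
    * by move=> d; rewrite inE => /eqP ->.
    * by move=> d; rewrite inE => /eqP -> /=; rewrite /yext /= ey.
  + right.
    have ha : i < pv w i.
      have := stab_compl (x := i) hst ltac:(lia).
      have := pv_ne (w := w) (x := i) (y := i.+1) ltac:(lia) ltac:(lia) ltac:(lia).
      rewrite h; lia.
    have ey : sort leq [:: pv w i; pv w i.+1] = [:: i; pv w i] by rewrite h sort21.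
    apply: (occ21 (x1 := i) (x2 := i.+1)); try lia.
    * move=> d; rewrite !inE => /or3P [] /eqP -> x; rewrite /xext /yext /= ey /=; lia.
    * by move=> d; rewrite inE => /eqP ->.
    * by move=> d; rewrite inE => /eqP -> /=; rewrite /yext /= ey.
Qed.
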